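(* Let $M$ be a nontrivial monoid in $\mathcal{C}$ and let $V=\mathbb{R}\otimes_\mathbb{Z}\mathrm{gp}(M)$. The following are equivalent: (a) $M$ is an HFM; (b) every face submonoid of $M$ is an HFM; (c) $\dim\mathsf{conv}_V(\mathcal{A}(M))<\dim\mathsf{cone}_V(M)$.
   Context: Convention: all monoids are commutative, cancellative, and reduced, written additively; $M^\bullet=M\setminus\{0\}$; atoms $\mathcal{A}(M)=M^\bullet\setminus(M^\bullet+M^\bullet)$. $\mathcal{C}$ is the class of monoids isomorphic to a submonoid of a free commutative monoid of finite rank (equivalently, of $(\mathbb{N}^d,+)$). $M$ is regarded as a submonoid of $V=\mathbb{R}\otimes_\mathbb{Z}\mathrm{gp}(M)$; $\mathsf{cone}_V(M)$ is the set of finite nonnegative linear combinations of elements of $M$ and $\mathsf{conv}_V$ denotes convex hull; dimensions are dimensions of affine hulls. A face of a cone $C$ is a cone $F\subseteq C$ such that whenever $x,y\in C$ and $F$ meets the open segment between $x$ and $y$, then $x,y\in F$; a face submonoid of $M$ is $M\cap F$ for a face $F$ of $\mathsf{cone}_V(M)$. A factorization of $x\in M$ is a formal sum (multiset) of atoms summing to $x$; its length is the number of atoms counted with multiplicity. $M$ is an HFM (half-factorial monoid) if every element is a sum of atoms and any two factorizations of the same nonzero element have the same length. *)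

(* Defs.v *)
(* Monoids in class C are represented as submonoids of (N^d,+),
   i.e. predicates on row vectors 'rV[nat]_d. The real vector space V is
   realised inside 'rV[R]_d (R an arbitrary real field) via the embedding emb. *)
From HB Require Import structures.
From mathcomp Require Import all_boot all_order all_algebra.
Set Implicit Arguments. Unset Strict Implicit. Unset Printing Implicit Defensive.
Import Order.TTheory GRing.Theory Num.Theory.
Local Open Scope ring_scope.

Definition submonoid (d : nat) (M : 'rV[nat]_d -> Prop) : Prop :=
  M 0 /\ (forall x y, M x -> M y -> M (x + y)).

Definition is_atom (d : nat) (M : 'rV[nat]_d -> Prop) (x : 'rV[nat]_d) : Prop :=
  M x /\ x <> 0 /\
  ~ (exists y z, M y /\ M z /\ y <> 0 /\ z <> 0 /\ x = y + z).

(* a factorization of x in M: a (multi)set of atoms of M, listed as a sequence,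
   summing to x; its length is the size of the sequence *)
Definition is_factorization (d : nat) (M : 'rV[nat]_d -> Prop)
  (x : 'rV[nat]_d) (s : seq 'rV[nat]_d) : Prop :=
  (forall a, a \in s -> is_atom M a) /\ \sum_(a <- s) a = x.

Definition HFM (d : nat) (M : 'rV[nat]_d -> Prop) : Prop :=
  (forall x, M x -> exists s, is_factorization M x s) /\
  (forall x s t, M x -> x <> 0 -> is_factorization M x s ->
     is_factorization M x t -> size s = size t).

Definition emb (R : realFieldType) (d : nat) (x : 'rV[nat]_d) : 'rV[R]_d :=
  \row_i ((x 0 i)%:R).

Definition coneV (R : realFieldType) (d : nat) (M : 'rV[nat]_d -> Prop)
  (v : 'rV[R]_d) : Prop :=
  exists s : seq ('rV[nat]_d * R),
    (forall p, p \in s -> M p.1 /\ 0 <= p.2) /\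
    v = \sum_(p <- s) p.2 *: emb R p.1.

Definition convV (R : realFieldType) (d : nat) (A : 'rV[nat]_d -> Prop)
  (v : 'rV[R]_d) : Prop :=
  exists s : seq ('rV[nat]_d * R),
    (forall p, p \in s -> A p.1 /\ 0 <= p.2) /\
    \sum_(p <- s) p.2 = 1 /\
    v = \sum_(p <- s) p.2 *: emb R p.1.

Definition is_cone (R : realFieldType) (d : nat) (F : 'rV[R]_d -> Prop) : Prop :=
  F 0 /\ (forall x y, F x -> F y -> F (x + y)) /\
  (forall (c : R) x, 0 <= c -> F x -> F (c *: x)).

Definition is_face (R : realFieldType) (d : nat) (C F : 'rV[R]_d -> Prop) : Prop :=
  is_cone F /\ (forall x, F x -> C x) /\
  (forall x y (t : R), C x -> C y -> 0 < t -> t < 1 ->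
     F ((1 - t) *: x + t *: y) -> F x /\ F y).

Definition face_submonoid (R : realFieldType) (d : nat) (M : 'rV[nat]_d -> Prop)
  (F : 'rV[R]_d -> Prop) : 'rV[nat]_d -> Prop :=
  fun x => M x /\ F (emb R x).

(* The dimension is the dimension of the direction space, i.e. the maximal
   dimension of the span of differences x - x0 with x ranging over finite
   subsets of S, for a base point x0 in S. *)
Definition is_affdim (R : realFieldType) (d : nat) (S : 'rV[R]_d -> Prop)
  (n : int) : Prop :=
  ((forall x, ~ S x) /\ n = -1) \/
  (exists x0, S x0 /\
     (exists s : seq 'rV[R]_d, (forall x, x \in s -> S x) /\
        (\dim <<[seq x - x0 | x <- s]>>%VS)%:Z = n) /\
     (forall s : seq 'rV[R]_d, (forall x, x \in s -> S x) ->
        (\dim <<[seq x - x0 | x <- s]>>%VS)%:Z <= n)).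

(* Main.v *)
Require Import Defs.
From HB Require Import structures.
From mathcomp Require Import all_boot all_order all_algebra zify.
From Stdlib Require Import Classical FunctionalExtensionality PropExtensionality.
Import Order.TTheory GRing.Theory Num.Theory.
Set Implicit Arguments. Unset Strict Implicit. Unset Printing Implicit Defensive.
Local Open Scope ring_scope.

Definition wt (d : nat) (x : 'rV[nat]_d) : nat := (\sum_(i < d) x ord0 i)%N.

Lemma wtD d (x y : 'rV[nat]_d) : wt (x + y) = (wt x + wt y)%N.
Proof. by rewrite /wt -big_split /=; apply: eq_bigr => i _; rewrite mxE. Qed.

Lemma wt_eq0 d (x : 'rV[nat]_d) : wt x = 0%N -> x = 0.
Proof.
move=> /eqP; rewrite /wt sum_nat_eq0 => /forallP H.
apply/matrixP => i j; rewrite ord1 mxE; have := H j; rewrite implyTb => /eqP E.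
exact: E.
Qed.

Lemma atomic d (M : 'rV[nat]_d -> Prop) : submonoid M ->
  forall x, M x -> exists s, is_factorization M x s.
Proof.
move=> HM x; move: {2}(wt x) (leqnn (wt x)) => n; elim: n x => [|n IH] x Hx Mx.
  exists [::]; split => //; rewrite big_nil; apply/esym/wt_eq0.
  by apply/eqP; rewrite -leqn0.
have [->|x0] := eqVneq x 0; first by exists [::]; rewrite /is_factorization big_nil.
case: (classic (is_atom M x)) => Ha.
  by exists [:: x]; split; [move=> a; rewrite inE => /eqP ->|rewrite big_seq1].
have [y [z [My [Mz [y0 [z0 Exyz]]]]]] : exists y z, M y /\ M z /\ y <> 0 /\ z <> 0 /\ x = y + z.
  apply: NNPP => H; apply: Ha; split => //; split => //; exact/eqP.
have wy : (wt y <= n)%N.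
  have : wt z <> 0%N by move/wt_eq0.
  move: Hx; rewrite Exyz wtD; lia.
have wz : (wt z <= n)%N.
  have : wt y <> 0%N by move/wt_eq0.
  move: Hx; rewrite Exyz wtD; lia.
have [s [Hs1 Hs2]] := IH y wy My; have [t [Ht1 Ht2]] := IH z wz Mz.
exists (s ++ t); split; last by rewrite big_cat /= Hs2 Ht2.
by move=> a; rewrite mem_cat => /orP [] ?; [apply: Hs1|apply: Ht1].
Qed.

Lemma sum_inM d (M : 'rV[nat]_d -> Prop) (s : seq 'rV[nat]_d) : submonoid M ->
  (forall a, a \in s -> M a) -> M (\sum_(a <- s) a).
Proof.
case=> M0 MD; elim: s => [|a s IH] H; first by rewrite big_nil.
rewrite big_cons; apply: MD; first by apply: H; rewrite inE eqxx.
by apply: IH => b Hb; apply: H; rewrite inE Hb orbT.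
Qed.

Lemma embD (R : realFieldType) d (x y : 'rV[nat]_d) : emb R (x + y) = emb R x + emb R y.
Proof. by apply/rowP => j; rewrite !mxE natrD. Qed.

Lemma emb0 (R : realFieldType) d : emb R (0 : 'rV[nat]_d) = 0.
Proof. by apply/rowP => j; rewrite !mxE. Qed.

Lemma emb_sum (R : realFieldType) d (s : seq 'rV[nat]_d) :
  emb R (\sum_(a <- s) a) = \sum_(a <- s) emb R a.
Proof.
elim: s => [|a s IH]; first by rewrite !big_nil emb0.
by rewrite !big_cons embD IH.
Qed.

Lemma cone_is_cone (R : realFieldType) d (M : 'rV[nat]_d -> Prop) : is_cone (@coneV R d M).
Proof.
split; first by exists [::]; rewrite big_nil.
split.
  move=> x y [s [Hs ->]] [t [Ht ->]]; exists (s ++ t); split; last by rewrite big_cat.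
  by move=> p; rewrite mem_cat => /orP [] ?; [apply: Hs|apply: Ht].
move=> c x c0 [s [Hs ->]]; exists [seq (p.1, c * p.2) | p <- s]; split.
  move=> p /mapP [q Hq ->] /=; have [? ?] := Hs q Hq; split => //; exact: mulr_ge0.
by rewrite big_map scaler_sumr; apply: eq_bigr => p _; rewrite scalerA.
Qed.

Lemma emb_cone (R : realFieldType) d (M : 'rV[nat]_d -> Prop) x : M x -> @coneV R d M (emb R x).
Proof. by move=> Mx; exists [:: (x, 1)]; split; [move=> p; rewrite inE => /eqP -> | rewrite big_seq1 scale1r]. Qed.

Lemma cone_face (R : realFieldType) d (M : 'rV[nat]_d -> Prop) : is_face (@coneV R d M) (@coneV R d M).
Proof. by split; [exact: cone_is_cone | split]. Qed.

Lemma divclosed (R : realFieldType) d (M : 'rV[nat]_d -> Prop) F : submonoid M ->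
  is_face (@coneV R d M) F -> forall y z, M y -> M z -> F (emb R (y + z)) -> F (emb R y) /\ F (emb R z).
Proof.
move=> HM [[F0 [FD FZ]] [FC Ff]] y z My Mz Fyz.
have h2 : (0 : R) < 2^-1 by rewrite invr_gt0 ltr0n.
have h21 : (2^-1 : R) < 1 by rewrite invf_lt1 ?ltr0n // ltr1n.
have Hc : forall w, M w -> @coneV R d M (2%:R *: emb R w).
  by move=> w Mw; have [_ [_ CZ]] := @cone_is_cone R d M; apply: CZ; [exact: ler0n| exact: emb_cone].
have E : emb R (y + z) = (1 - 2^-1) *: (2%:R *: emb R y) + 2^-1 *: (2%:R *: emb R z).
  have -> : (1 - 2^-1 : R) = 2^-1 by rewrite {1}(splitr 1) mul1r addrK.
  by rewrite !scalerA mulVf ?pnatr_eq0 // !scale1r embD.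
rewrite E in Fyz; have [F1 F2] := Ff _ _ _ (Hc _ My) (Hc _ Mz) h2 h21 Fyz.
have K : forall w, F (2%:R *: emb R w) -> F (emb R w).
  move=> w Fw; have := FZ (2^-1) _ (ltW h2) Fw.
  by rewrite scalerA mulVf ?pnatr_eq0 // scale1r.
by split; apply: K.
Qed.

Lemma face_fact (R : realFieldType) d (M : 'rV[nat]_d -> Prop) F : submonoid M ->
  is_face (@coneV R d M) F -> forall x s, F (emb R x) -> is_factorization M x s ->
  forall a, a \in s -> F (emb R a).
Proof.
move=> HM HF x s Fx [Hs Hsx] a Ha.
have Ma : M a by have [] := Hs a Ha.
have Mr : M (\sum_(b <- rem a s) b).
  apply: sum_inM => // b Hb; have [] := Hs b (mem_rem Hb) => //.
rewrite -Hsx (big_rem a Ha) /= in Fx.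
by have [] := divclosed HM HF Ma Mr Fx.
Qed.

Lemma face_atom (R : realFieldType) d (M : 'rV[nat]_d -> Prop) F : submonoid M ->
  is_face (@coneV R d M) F -> forall a,
  is_atom (face_submonoid M F) a <-> (is_atom M a /\ F (emb R a)).
Proof.
move=> HM HF a; split.
  move=> [[Ma Fa] [a0 Hn]]; split => //; split => //; split => //.
  move=> [y [z [My [Mz [y0 [z0 E]]]]]]; apply: Hn; exists y, z.
  have [Fy Fz] := divclosed HM HF My Mz (eq_ind _ (fun w => F (emb R w)) Fa _ E).
  by do !split.
move=> [[Ma [a0 Hn]] Fa]; split => //; split => //.
move=> [y [z [[My _] [[Mz _] [y0 [z0 E]]]]]]; apply: Hn; exists y, z; by do !split.
Qed.

Lemma face_HFM (R : realFieldType) d (M : 'rV[nat]_d -> Prop) F : submonoid M ->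
  is_face (@coneV R d M) F -> HFM M -> HFM (face_submonoid M F).
Proof.
move=> HM HF [Hex Hu]; split.
  move=> x [Mx Fx]; have [s Hs] := Hex x Mx; exists s; split; last by case: Hs.
  move=> a Ha; apply/(face_atom HM HF); split; first by case: Hs => H _; apply: H.
  exact: (face_fact HM HF Fx Hs).
move=> x s t [Mx Fx] x0 [Hs1 Hs2] [Ht1 Ht2]; apply: (Hu x) => //.
  by split => // a /Hs1 /(face_atom HM HF) [].
by split => // a /Ht1 /(face_atom HM HF) [].
Qed.

Lemma part1 (R : realFieldType) d (M : 'rV[nat]_d -> Prop) : submonoid M ->
  (HFM M <-> (forall F : 'rV[R]_d -> Prop, is_face (@coneV R d M) F ->
                 HFM (face_submonoid M F))).
Proof.
move=> HM; split; first by move=> H F HF; exact: face_HFM.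
move=> H; have := H _ (cone_face R M).
have -> : face_submonoid M (@coneV R d M) = M; last by [].
apply: functional_extensionality => x; apply: propositional_extensionality.
by split; [case | move=> Mx; split => //; exact: emb_cone].
Qed.

Lemma max_nat (P : nat -> Prop) B : P 0%N -> (forall k, P k -> (k <= B)%N) ->
  exists k, P k /\ forall j, P j -> (j <= k)%N.
Proof.
elim: B => [|B IH] P0 HB.
  by exists 0%N; split => // j /HB.
case: (classic (P B.+1)) => HPB; first by exists B.+1.
apply: IH => // k Pk; have := HB k Pk; rewrite leq_eqVlt => /orP [/eqP E|//].
by rewrite E in Pk.
Qed.

Lemma affdim_exists (R : realFieldType) d (S : 'rV[R]_d -> Prop) : exists n, is_affdim S n.
Proof.
case: (classic (exists x, S x)) => [[x0 Sx0]|H]; last first.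
  by exists (-1); left; split => // x Sx; apply: H; exists x.
pose P k := exists s : seq 'rV[R]_d, (forall x, x \in s -> S x) /\
        (\dim <<[seq x - x0 | x <- s]>>%VS) = k.
have [k [Pk Hk]] : exists k, P k /\ forall j, P j -> (j <= k)%N.
  apply: (@max_nat P (\dim (fullv : {vspace 'rV[R]_d}))).
    by exists [::]; split => //; rewrite span_nil dimv0.
  by move=> k [s [_ <-]]; apply: dimvS; apply: subvf.
exists k%:Z; right; exists x0; split => //; split.
  by case: Pk => s [Hs Hd]; exists s; rewrite Hd.
by move=> s Hs; rewrite lez_nat; apply: Hk; exists s.
Qed.

Lemma atom_conv (R : realFieldType) d (M : 'rV[nat]_d -> Prop) a :
  is_atom M a -> @convV R d (is_atom M) (emb R a).
Proof.
by move=> Ha; exists [:: (a, 1)]; split; [move=> p; rewrite inE => /eqP -> | rewrite !big_seq1 scale1r].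
Qed.

Lemma conv_cone (R : realFieldType) d (M : 'rV[nat]_d -> Prop) v :
  @convV R d (is_atom M) v -> @coneV R d M v.
Proof. by move=> [s [Hs [_ ->]]]; exists s; split => // p /Hs [[? _] ?]. Qed.

Lemma span_mono (R : realFieldType) d (X Y : seq 'rV[R]_d) v :
  {subset X <= Y} -> v \in <<X>>%VS -> v \in <<Y>>%VS.
Proof. by move=> H; apply/subvP/sub_span. Qed.

Lemma cone_span (R : realFieldType) d (M : 'rV[nat]_d -> Prop) v : submonoid M ->
  @coneV R d M v -> exists T, (forall a, a \in T -> is_atom M a) /\
     v \in <<map (@emb R d) T>>%VS.
Proof.
move=> HM [s [Hs ->]]; elim: s Hs => [|p s IH] Hs.
  by exists [::]; split => //; rewrite big_nil mem0v.
have [T [HT HvT]] : exists T, (forall a, a \in T -> is_atom M a) /\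
     \sum_(q <- s) q.2 *: emb R q.1 \in <<map (@emb R d) T>>%VS.
  by apply: IH => q Hq; apply: Hs; rewrite inE Hq orbT.
have [Mp _] := Hs p (mem_head _ _).
have [f [Hf Hfs]] := atomic HM Mp.
exists (f ++ T); split.
  by move=> a; rewrite mem_cat => /orP [] ?; [apply: Hf|apply: HT].
rewrite big_cons; apply: memvD.
  apply: memvZ; rewrite -Hfs emb_sum big_seq; apply: memv_suml => a Ha.
  by apply: memv_span; rewrite map_cat mem_cat map_f.
by apply: span_mono HvT => w; rewrite map_cat mem_cat => ->; rewrite orbT.
Qed.

Lemma cone_span_list (R : realFieldType) d (M : 'rV[nat]_d -> Prop) (l : seq 'rV[R]_d) :
  submonoid M -> (forall v, v \in l -> @coneV R d M v) ->
  exists T, (forall a, a \in T -> is_atom M a) /\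
     forall v, v \in l -> v \in <<map (@emb R d) T>>%VS.
Proof.
move=> HM; elim: l => [|v l IH] Hl; first by exists [::].
have [T [HT HTl]] := IH (fun w Hw => Hl w (mem_behead (s:=v :: l) Hw)).
have [T' [HT' HT'v]] := cone_span HM (Hl v (mem_head _ _)).
exists (T' ++ T); split.
  by move=> a; rewrite mem_cat => /orP [] ?; [apply: HT'|apply: HT].
move=> w; rewrite inE => /orP [/eqP ->|Hw].
  by apply: span_mono HT'v => u; rewrite map_cat mem_cat => ->.
by apply: span_mono (HTl w Hw) => u; rewrite map_cat mem_cat => ->; rewrite orbT.
Qed.

Lemma sum_subc (V : zmodType) (I : Type) (s : seq I) (f : I -> V) c :
  \sum_(a <- s) (f a - c) = \sum_(a <- s) f a - c *+ size s.
Proof.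
elim: s => [|a s IH]; first by rewrite !big_nil subr0.
by rewrite !big_cons IH /= mulrS opprD addrACA.
Qed.

Lemma part2b (R : realFieldType) d (M : 'rV[nat]_d -> Prop) (m n : int) : submonoid M ->
  is_affdim (@convV R d (is_atom M)) m -> is_affdim (@coneV R d M) n -> m < n -> HFM M.
Proof.
move=> HM Hm Hn Hmn; split; first exact: atomic.
move=> x s t Mx x0 [Hs1 Hs2] [Ht1 Ht2].
case: (eqVneq (size s) (size t)) => // Hne; exfalso.
have [a Ha] : exists a, a \in s ++ t.
  have : s ++ t != [::].
    apply/eqP => E; have := congr1 size E; rewrite size_cat /=; move: Hne => /eqP; lia.
  by case: (s ++ t) => [|a ?] // _; exists a; rewrite mem_head.
have Hat : is_atom M a by move: Ha; rewrite mem_cat => /orP [] ?; [apply: Hs1|apply: Ht1].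
case: Hm => [[Hempty _]|[x0' [Cx0 [_ Hbound]]]].
  by apply: (Hempty (emb R a)); exact: atom_conv.
case: Hn => [[Hempty _]|[y0 [Cy0 [[sc [Hsc Hdim]] _]]]].
  by apply: (Hempty 0); have [] := @cone_is_cone R d M.
have [T [HT HTv]] : exists T, (forall a, a \in T -> is_atom M a) /\
     forall v, v \in y0 :: sc -> v \in <<map (@emb R d) T>>%VS.
  apply: cone_span_list => // v; rewrite inE => /orP [/eqP ->//|]; exact: Hsc.
have D1 : (\dim <<[seq (v - y0)%R | v <- sc]>>%VS <= \dim <<map (@emb R d) T>>%VS)%N.
  apply: dimvS; apply/span_subvP => w /mapP [v Hv ->].
  by apply: memvB; apply: HTv; rewrite inE ?eqxx ?Hv ?orbT.
pose L := map (@emb R d) (T ++ s ++ t).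
pose W := <<[seq v - x0' | v <- L]>>%VS.
have HL : forall v, v \in L -> @convV R d (is_atom M) v.
  move=> v /mapP [b Hb ->]; apply: atom_conv.
  by move: Hb; rewrite !mem_cat => /or3P [] ?; [apply: HT|apply: Hs1|apply: Ht1].
have HW : forall b, b \in T ++ s ++ t -> emb R b - x0' \in W.
  by move=> b Hb; apply: memv_span; apply: map_f; apply: map_f.
have Ss : \sum_(b <- s) (emb R b - x0') \in W.
  by rewrite big_seq; apply: memv_suml => b Hb; apply: HW; rewrite !mem_cat Hb orbT.
have St : \sum_(b <- t) (emb R b - x0') \in W.
  by rewrite big_seq; apply: memv_suml => b Hb; apply: HW; rewrite !mem_cat Hb !orbT.
have Dst := memvB Ss St.
rewrite !sum_subc -!emb_sum Hs2 Ht2 opprB addrC addrA subrK -!scaler_nat -scalerBl in Dst.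
have c0 : ((size t)%:R - (size s)%:R : R) != 0.
  by rewrite subr_eq0 eqr_nat eq_sym.
have Hx0 : x0' \in W.
  by have := memvZ ((size t)%:R - (size s)%:R)^-1 Dst; rewrite scalerA mulVf // scale1r.
have D2 : (\dim <<map (@emb R d) T>>%VS <= \dim W)%N.
  apply: dimvS; apply/span_subvP => w /mapP [b Hb ->].
  rewrite -(subrK x0' (emb R b)); apply: memvD => //; apply: HW; by rewrite mem_cat Hb.
have := Hbound L HL; rewrite -/W => H3.
have : n <= m.
  rewrite -Hdim; apply: le_trans H3; rewrite lez_nat; exact: leq_trans D1 D2.
by rewrite leNgt Hmn.
Qed.
Lemma sum_nseq (V : nmodType) (I : Type) (m : nat) (x : I) (F : I -> V) :
  \sum_(a <- nseq m x) F a = F x *+ m.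
Proof. by elim: m => [|m IH]; rewrite ?big_nil // big_cons IH mulrS. Qed.

Lemma clear_den (k : nat) (q : 'I_k -> rat) :
  exists (N : int) (z : 'I_k -> int), N != 0 /\ forall i, (z i)%:~R = q i * N%:~R.
Proof.
pose N := \prod_(i < k) denq (q i).
exists N, (fun i => numq (q i) * \prod_(j < k | j != i) denq (q j)); split.
  by rewrite gt_eqF // /N prodr_gt0 // => i _; apply: denq_gt0.
move=> i; rewrite /N [in RHS](bigD1 i) //= !intrM mulrA; congr (_ * _).
have dn : (denq (q i))%:~R != 0 :> rat by rewrite intr_eq0 denq_neq0.
by rewrite -{2}(divq_num_den (q i)) divfK.
Qed.

Lemma intr_sum' (I : Type) (r : seq I) (F : I -> int) :
  (\sum_(i <- r) F i)%:~R = \sum_(i <- r) (F i)%:~R :> rat.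
Proof. by rewrite rmorph_sum. Qed.

Lemma intr_natz (R : pzRingType) (n : nat) : (n%:Z)%:~R = n%:R :> R.
Proof. by rewrite -natz mulrz_nat. Qed.

Lemma natrMn' (R : pzSemiRingType) (x n : nat) : ((x *+ n)%:R : R) = x%:R *+ n.
Proof. by elim: n => [|n IH]; rewrite ?mulr0n // !mulrS natrD IH. Qed.

Lemma rat_rel (R : realFieldType) d (L : seq ('rV[nat]_d * R)) :
  \sum_(p <- L) p.2 *: emb R p.1 = 0 -> \sum_(p <- L) p.2 = 1 ->
  exists s t : seq 'rV[nat]_d, {subset s <= map fst L} /\ {subset t <= map fst L} /\
   \sum_(a <- s) a = \sum_(a <- t) a /\ size s != size t.
Proof.
move=> Hv Hc.
pose k := size L.
pose f (i : 'I_k) := (nth (0, 0) L i).1.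
pose c (i : 'I_k) := (nth (0, 0) L i).2.
have Hv' : \sum_(i < k) c i *: emb R (f i) = 0 by move: Hv; rewrite (big_nth (0,0)) big_mkord.
have Hc' : \sum_(i < k) c i = 1 by move: Hc; rewrite (big_nth (0,0)) big_mkord.
pose B : 'M[rat]_(k, d) := \matrix_(i, j) ((f i) 0 j)%:R.
pose C : 'M[rat]_(k, 1) := const_mx 1.
pose e : 'M[rat]_(1, d + 1) := row_mx 0 (const_mx 1).
pose r : 'rV[R]_k := \row_i c i.
have Hr : r *m map_mx ratr (row_mx B C) = map_mx ratr e.
  rewrite !map_row_mx mul_mx_row map_mx0 !map_const_mx rmorph1.
congr row_mx.
  - apply/rowP => j; have := congr1 (fun M : 'rV_d => M 0 j) Hv'; rewrite /= summxE !mxE => E; apply: (etrans _ E).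
    by apply: eq_bigr => i _; rewrite !mxE ratr_nat.
  - apply/rowP => j; rewrite !mxE; apply: (etrans _ Hc'); apply: eq_bigr => i _.
    by rewrite !mxE mulr1.
have : (e <= row_mx B C)%MS by rewrite -(map_submx (ratr : {rmorphism rat -> R})) -Hr submxMl.
case/submxP => D; rewrite mul_mx_row => /eq_row_mx [HB HC].
pose q i := D 0 i.
have EB : forall j, \sum_i q i * ((f i) 0 j)%:R = 0.
  move=> j; have := congr1 (fun M : 'rV_d => M 0 j) HB; rewrite /= !mxE => E; apply: (etrans _ (esym E)).
  by apply: eq_bigr => i _; rewrite !mxE.
have EC : \sum_i q i = 1.
  have := congr1 (fun M : 'M_1 => M 0 0) HC; rewrite /= !mxE => E; apply: (etrans _ (esym E)).
  by apply: eq_bigr => i _; rewrite !mxE mulr1.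
have [N [z [N0 Hz]]] := clear_den q.
have ZB : forall j, \sum_i z i * ((f i) 0 j)%:Z = 0.
  move=> j; apply: (@intr_inj rat); rewrite rmorph_sum rmorph0 /=.
  under eq_bigr do rewrite intrM Hz intr_natz mulrAC.
  by rewrite -mulr_suml EB mul0r.
have ZC : \sum_i z i = N.
  apply: (@intr_inj rat); rewrite rmorph_sum /=.
  under eq_bigr do rewrite Hz.
  by rewrite -mulr_suml EC mul1r.
pose pos i := if 0 <= z i then `|z i|%N else 0%N.
pose neg i := if 0 <= z i then 0%N else `|z i|%N.
have Hpn : forall i, (pos i)%:Z - (neg i)%:Z = z i.
  move=> i; rewrite /pos /neg; case: ifP => H.
    by rewrite gez0_abs // subr0.
  by rewrite ltz0_abs ?sub0r ?opprK // ltNge H.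
pose s := flatten [seq nseq (pos i) (f i) | i <- index_enum 'I_k].
pose t := flatten [seq nseq (neg i) (f i) | i <- index_enum 'I_k].
have sub : forall (g : 'I_k -> nat) a,
    a \in flatten [seq nseq (g i) (f i) | i <- index_enum 'I_k] -> a \in map fst L.
  move=> g a /flattenP [u /mapP [i _ ->]]; rewrite mem_nseq => /andP [_ /eqP ->].
  by apply: map_f; apply: mem_nth.
have sums : forall (g : 'I_k -> nat),
    \sum_(a <- flatten [seq nseq (g i) (f i) | i <- index_enum 'I_k]) a = \sum_(i < k) f i *+ g i.
  by move=> g; rewrite big_flatten big_map; apply: eq_bigr => i _; rewrite sum_nseq.
have sizes : forall (g : 'I_k -> nat),
    size (flatten [seq nseq (g i) (f i) | i <- index_enum 'I_k]) = (\sum_(i < k) g i)%N.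
  move=> g; rewrite -sum1_size big_flatten big_map; apply: eq_bigr => i _.
  by rewrite sum_nseq natn.
exists s, t; split; first exact: sub.
split; first exact: sub.
split.
  rewrite !sums; apply/rowP => j; rewrite !summxE.
  under eq_bigr do rewrite mulmxnE.
  under [in RHS]eq_bigr do rewrite mulmxnE.
  apply/eqP; rewrite -(eqr_nat int) -subr_eq0 !natr_sum -sumrB.
  apply/eqP; rewrite -[RHS](ZB j); apply: eq_bigr => i _.
  rewrite natrMn' natrMn' -[_ *+ pos i]mulr_natr -[_ *+ neg i]mulr_natr -mulrBr.
  by rewrite natz natz natz Hpn mulrC.
rewrite !sizes; apply/eqP => E.
have : (\sum_(i < k) pos i)%N%:R - (\sum_(i < k) neg i)%N%:R = N :> int.
  rewrite !natr_sum -sumrB -ZC; apply: eq_bigr => i _.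
  by rewrite natz natz Hpn.
rewrite E subrr => H0; move: N0; by rewrite -H0 eqxx.
Qed.

Lemma span_cons_dec (R : realFieldType) d (v x : 'rV[R]_d) X :
  v \in <<x :: X>>%VS -> exists c w, w \in <<X>>%VS /\ v = c *: x + w.
Proof. by rewrite span_cons => /memv_addP [u /vlineP [c ->] [w Hw ->]]; exists c, w. Qed.

Definition scl (R : realFieldType) d (c : R) (L : seq ('rV[nat]_d * R)) :=
  map (fun p => (p.1, c * p.2)) L.

Lemma scl_vs (R : realFieldType) d (c : R) (L : seq ('rV[nat]_d * R)) :
  \sum_(p <- scl c L) p.2 *: emb R p.1 = c *: \sum_(p <- L) p.2 *: emb R p.1.
Proof. by rewrite big_map scaler_sumr; apply: eq_bigr => p _; rewrite scalerA. Qed.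

Lemma scl_cs (R : realFieldType) d (c : R) (L : seq ('rV[nat]_d * R)) :
  \sum_(p <- scl c L) p.2 = c * \sum_(p <- L) p.2.
Proof. by rewrite big_map mulr_sumr. Qed.

Lemma scl_atoms (R : realFieldType) d M (c : R) (L : seq ('rV[nat]_d * R)) :
  (forall p, p \in L -> is_atom M p.1) -> forall p, p \in scl c L -> is_atom M p.1.
Proof. by move=> H p; rewrite /scl; case/mapP => q Hq E; rewrite E; exact: (H q Hq). Qed.

Lemma cat_atoms d M (R : realFieldType) (L1 L2 : seq ('rV[nat]_d * R)) :
  (forall p, p \in L1 -> is_atom M p.1) -> (forall p, p \in L2 -> is_atom M p.1) ->
  forall p, p \in L1 ++ L2 -> is_atom M p.1.
Proof. by move=> H1 H2 p; rewrite mem_cat => /orP [] ?; [apply: H1|apply: H2]. Qed.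

Lemma span_rep (R : realFieldType) d (M : 'rV[nat]_d -> Prop) (x0 : 'rV[R]_d)
  (L0 : seq ('rV[nat]_d * R)) :
  (forall p, p \in L0 -> is_atom M p.1) -> \sum_(p <- L0) p.2 *: emb R p.1 = x0 ->
  \sum_(p <- L0) p.2 = 1 ->
  forall sc, (forall x, x \in sc -> @convV R d (is_atom M) x) ->
  forall v, v \in <<[seq x - x0 | x <- sc]>>%VS ->
  exists L, (forall p, p \in L -> is_atom M p.1) /\
    \sum_(p <- L) p.2 *: emb R p.1 = v /\ \sum_(p <- L) p.2 = 0.
Proof.
move=> HA0 HV0 HC0; elim => [|x sc IH] Hsc v.
  rewrite span_nil memv0 => /eqP ->; exists [::]; by rewrite !big_nil.
move=> /span_cons_dec [c [w [Hw ->]]].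
have [Lw [HAw [HVw HCw]]] := IH (fun y Hy => Hsc y (mem_behead (s:=x :: sc) Hy)) w Hw.
have [Lx [HLx [HCx HVx]]] := Hsc x (mem_head _ _).
have HAx : forall p, p \in Lx -> is_atom M p.1 by move=> p /HLx [].
exists (scl c Lx ++ scl (-c) L0 ++ Lw); split.
  apply: cat_atoms; first exact: scl_atoms.
  apply: cat_atoms => //; exact: scl_atoms.
rewrite !big_cat !scl_vs !scl_cs /= HVw HCw -HVx HV0 HCx HC0; split.
  by rewrite scalerBr scaleNr addrA.
by rewrite !mulr1 addr0 subrr.
Qed.

Lemma sum_atoms0 d (M : 'rV[nat]_d -> Prop) (s : seq 'rV[nat]_d) :
  (forall a, a \in s -> is_atom M a) -> \sum_(a <- s) a = 0 -> s = [::].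
Proof.
case: s => [//|a s] H; rewrite big_cons => E.
have := congr1 (@wt d) E; rewrite wtD.
have -> : wt (0 : 'rV[nat]_d) = 0%N by rewrite /wt big1 // => i _; rewrite mxE.
move=> Hw; have : wt a = 0%N by lia.
move/wt_eq0 => a0; have [_ [Ha0 _]] := H a (mem_head _ _); by case: Ha0.
Qed.

Lemma part2a (R : realFieldType) d (M : 'rV[nat]_d -> Prop) : submonoid M ->
  (exists x, M x /\ x <> 0) -> HFM M -> exists m n : int,
      is_affdim (@convV R d (is_atom M)) m /\ is_affdim (@coneV R d M) n /\ m < n.
Proof.
move=> HM [x1 [Mx1 x10]] [Hex Hu].
have [m Hm] := affdim_exists (@convV R d (is_atom M)).
have [n Hn] := affdim_exists (@coneV R d M).
exists m, n; split => //; split => //.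
rewrite ltNge; apply/negP => Hnm.
have [a0 Ha0] : exists a, is_atom M a.
  have [s [Hs1 Hs2]] := Hex x1 Mx1.
  case: s Hs1 Hs2 => [|a s] Hs1 Hs2; first by rewrite big_nil in Hs2; case: x10.
  by exists a; apply: Hs1; rewrite mem_head.
case: Hm => [[Hempty _]|[x0 [Cx0 [[sc [Hsc Hdim]] _]]]].
  by apply: (Hempty (emb R a0)); exact: atom_conv.
case: Hn => [[Hempty _]|[y0 [Cy0 [_ Hbound]]]].
  by apply: (Hempty 0); have [] := @cone_is_cone R d M.
pose U := <<(x0 :: sc)%SEQ>>%VS.
have DU : ((\dim U)%:Z <= n).
  have Hc : forall v, v \in (0 :: x0 :: sc) -> @coneV R d M v.
    move=> v; rewrite !inE => /orP [/eqP ->|/orP [/eqP ->|Hv]].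
    - by have [] := @cone_is_cone R d M.
    - exact: conv_cone.
    - by apply: conv_cone; apply: Hsc.
  apply: le_trans (Hbound _ Hc); rewrite lez_nat; apply: dimvS.
  apply/span_subvP => v Hv.
  pose l := (0 : 'rV[R]_d) :: x0 :: sc.
  have Hy : y0 \in <<[seq x - y0 | x <- l]>>%VS.
    have H0 : 0 - y0 \in <<[seq x - y0 | x <- l]>>%VS.
      by apply: memv_span; apply: (map_f (fun x => x - y0)); exact: mem_head.
    by rewrite sub0r memvN in H0.
  rewrite -(subrK y0 v); apply: memvD => //; apply: memv_span.
  by apply: (map_f (fun x => x - y0)); rewrite in_cons Hv orbT.
pose W := <<[seq x - x0 | x <- sc]>>%VS.
have WU : (W <= U)%VS.
  apply/span_subvP => v /mapP [y Hy ->]; apply: memvB; apply: memv_span.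
    by rewrite inE Hy orbT.
  exact: mem_head.
have Hx0 : x0 \in W.
  have : W == U.
    rewrite eqEdim WU /= -lez_nat Hdim; exact: le_trans DU Hnm.
  move/eqP => ->; apply: memv_span; exact: mem_head.
case: Cx0 => L0 [HL0 [HC0 HV0]].
have HA0 : forall p, p \in L0 -> is_atom M p.1 by move=> p /HL0 [].
have [L [HA [HV HC]]] := span_rep HA0 (esym HV0) HC0 Hsc Hx0.
have V1 : \sum_(p <- L0 ++ scl (-1) L) p.2 *: emb R p.1 = 0.
  by rewrite big_cat scl_vs HV -HV0 scaleN1r; apply: subrr.
have C1 : \sum_(p <- L0 ++ scl (-1) L) p.2 = 1.
  by rewrite big_cat /= scl_cs HC mulr0 addr0.
have [s [t [Hs [Ht [Est Hne]]]]] := rat_rel V1 C1.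
have Hat : forall s' : seq 'rV[nat]_d, (forall a, a \in s' -> a \in map fst (L0 ++ scl (-1) L)) ->
    forall a, a \in s' -> is_atom M a.
  move=> s' Hs' a Ha; case/mapP: (Hs' a Ha) => p Hp E; rewrite E.
  exact: (cat_atoms HA0 (scl_atoms (c:=-1) HA) Hp).
have Ms : M (\sum_(a <- s) a) by apply: sum_inM => // a /(Hat _ Hs) [].
case: (eqVneq (\sum_(a <- s) a) 0) => [E|E].
  have := sum_atoms0 (Hat _ Hs) E; have := sum_atoms0 (Hat _ Ht) (etrans (esym Est) E).
  by move=> Et Es; move: Hne; rewrite Es Et.
have Hf : size s = size t.
  apply: (Hu _ s t Ms); first exact/eqP.
    by split => //; exact: Hat Hs.
  by split; [exact: Hat Ht | exact: esym Est].
by move: Hne; rewrite Hf eqxx.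
Qed.

Theorem mainTheorem8 (R : realFieldType) (d : nat) (M : 'rV[nat]_d -> Prop)
  (HM : submonoid M) (Hnontriv : exists x, M x /\ x <> 0) :
  (HFM M <-> (forall F : 'rV[R]_d -> Prop, is_face (@coneV R d M) F ->
                 HFM (face_submonoid M F))) /\
  (HFM M <-> exists m n : int,
      is_affdim (@convV R d (is_atom M)) m /\ is_affdim (@coneV R d M) n /\ m < n).
Proof.
split; first exact: part1.
split; first exact: part2a.
by move=> [m [n [Hm [Hn Hmn]]]]; exact: part2b Hm Hn Hmn.
Qed.
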